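(* There is a function $\varepsilon(k)\to0$ as $k\to\infty$ such that for every integer $k\ge2$, every family $F$ of functions with codomain $\{0,1,\dots,k-1\}$, and every nonnegative integer $\eta$, \[\mathrm{opt}_{\mathrm{ag}}(F,\eta)\le (1+\varepsilon(k))\,k\ln k\,(\mathrm{opt}_{\mathrm{std}}(F)+\eta).\]
   Context: Let $F$ be a family of functions from a set $X$ to a set $Y$. Online learning of $F$ is a game between a learner and an adversary: the adversary secretly fixes some $f\in F$ and presents inputs $x_1,x_2,\dots\in X$ one at a time, chosen adaptively; after each input $x_t$ the learner guesses a value for $f(x_t)$; a mistake is an incorrect guess. In the standard model, after each guess the adversary reveals $f(x_t)$, and $\mathrm{opt}_{\mathrm{std}}(F)$ is the maximum number of mistakes under optimal play by both sides. In the agnostic model with parameter $\eta$, after each guess the adversary only says YES or NO, but may give incorrect feedback (a wrong YES/NO) in up to $\eta$ rounds; $\mathrm{opt}_{\mathrm{ag}}(F,\eta)$ is the worst-case number of mistakes of the learner (with respect to the chosen $f$) when both learner and adversary play optimally. *)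

(* Defs.v *)
From mathcomp Require Import all_boot.
From Stdlib Require Import Reals.

Set Implicit Arguments.
Unset Strict Implicit.
Unset Printing Implicit Defensive.

Section OnlineLearning.
Variables (X : Type) (Y : eqType).

(* ---------- Standard model ----------
   A (deterministic) learner maps the history of past rounds (input, revealed
   true label) and the current input to a guess. *)
Definition std_learner := seq (X * Y) -> X -> Y.

Fixpoint std_mistakes (L : std_learner) (f : X -> Y) (h : seq (X * Y))
    (xs : seq X) : nat :=
  match xs with
  | [::] => 0
  | x :: xs' => (L h x != f x) + std_mistakes L f (rcons h (x, f x)) xs'
  end.

Definition std_bound (F : (X -> Y) -> Prop) (m : nat) : Prop :=
  exists L : std_learner, forall f, F f -> forall xs : seq X,
    std_mistakes L f [::] xs <= m.

Definition is_opt_std (F : (X -> Y) -> Prop) (d : nat) : Prop :=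
  std_bound F d /\ forall m, std_bound F m -> d <= m.

(* ---------- Agnostic model with parameter eta ----------
   History: (input, guess, YES/NO answer received). *)
Definition ag_learner := seq (X * Y * bool) -> X -> Y.

(* Each round of the adversary is an input together with a flag saying whether
   the adversary lies (flips the correct YES/NO answer) in that round. *)
Fixpoint ag_mistakes (L : ag_learner) (f : X -> Y) (h : seq (X * Y * bool))
    (xs : seq (X * bool)) : nat :=
  match xs with
  | [::] => 0
  | (x, lie) :: xs' =>
      let y := L h x in
      (y != f x) + ag_mistakes L f (rcons h (x, y, (y == f x) (+) lie)) xs'
  end.

Definition ag_bound (F : (X -> Y) -> Prop) (eta m : nat) : Prop :=
  exists L : ag_learner, forall f, F f -> forall xs : seq (X * bool),
    count snd xs <= eta -> ag_mistakes L f [::] xs <= m.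

Definition is_opt_ag (F : (X -> Y) -> Prop) (eta a : nat) : Prop :=
  ag_bound F eta a /\ forall m, ag_bound F eta m -> a <= m.

End OnlineLearning.

(* Main.v *)
Require Import Defs.
From HB Require Import structures.
From mathcomp Require Import all_boot.
From Stdlib Require Import Reals Lra Lia Classical.
From Stdlib Require Znat.
From mathcomp Require Import zify.

Set Implicit Arguments.
Unset Strict Implicit.
Unset Printing Implicit Defensive.

HB.instance Definition _ := Monoid.isComLaw.Build R R0 Rplus
  (fun a b c => esym (Rplus_assoc a b c)) Rplus_comm Rplus_0_l.

Lemma iter_Rplus (n : nat) (c : R) : iter n (Rplus c) R0 = (INR n * c)%R.
Proof. elim: n => [|n IH]; first by rewrite /=; lra. rewrite iterS IH S_INR. lra. Qed.

Lemma In_map_seq (A B : Type) (g : A -> B) (a : A) (s : seq A) :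
  List.In a s -> List.In (g a) (map g s).
Proof. elim: s => [|b s IH] //= [->|H]; [by left|by right; apply: IH]. Qed.

Lemma In_mem (T : eqType) (a : T) (s : seq T) : a \in s -> List.In a s.
Proof.
elim: s => [|b s IH] //=; rewrite in_cons => /orP [/eqP->|H]; [by left|by right; apply: IH].
Qed.

Section Alg.
Variables (X : Type) (k : nat) (A : seq (X * 'I_k) -> X -> 'I_k) (y0 : 'I_k) (rho tau : R).
Local Open Scope R_scope.

Definition entry := (R * seq (X * 'I_k))%type.

Definition child (e : entry) (x : X) (y : 'I_k) (b : bool) : seq entry :=
  if b then (if A e.2 x == y then [:: e]
             else [:: (e.1 * (1 - tau), rcons e.2 (x, y)); (e.1 * tau, e.2)])
  else (if A e.2 x == y then
          (e.1 * tau, e.2) :: [seq (e.1 * (rho / INR k), rcons e.2 (x, l)) | l <- enum 'I_k]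
        else [:: e]).

Definition step (st : seq entry) x y b := flatten [seq child e x y b | e <- st].
Definition sumW (st : seq entry) := \big[Rplus/0]_(e <- st) e.1.
Definition sumWy (st : seq entry) x y := \big[Rplus/0]_(e <- st | A e.2 x == y) e.1.
Definition state (hist : seq (X * 'I_k * bool)) :=
  foldl (fun st t => step st t.1.1 t.1.2 t.2) [:: (1, [::])] hist.
Definition argmax (F : 'I_k -> R) :=
  foldl (fun b y => if Rlt_dec (F b) (F y) then y else b) y0 (enum 'I_k).
Definition learner : ag_learner X 'I_k := fun hist x => argmax (sumWy (state hist) x).

Lemma argmax_ge_aux (F : 'I_k -> R) (s : seq 'I_k) b :
  F b <= F (foldl (fun b y => if Rlt_dec (F b) (F y) then y else b) b s) /\
  forall y, List.In y s -> F y <= F (foldl (fun b y => if Rlt_dec (F b) (F y) then y else b) b s).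
Proof.
elim: s b => [|z s IH] b /=; first by split; [lra|].
have [H1 H2] := IH (if Rlt_dec (F b) (F z) then z else b).
split.
  destruct (Rlt_dec (F b) (F z)); simpl in *; lra.
move=> y [<-|Hy]; last by apply: H2.
destruct (Rlt_dec (F b) (F z)); simpl in *; lra.
Qed.

Lemma argmax_ge (F : 'I_k -> R) y : F y <= F (argmax F).
Proof. apply: (proj2 (argmax_ge_aux F (enum 'I_k) y0)); apply: In_mem; by rewrite mem_enum. Qed.

Lemma kpos : (0 < k)%nat.
Proof. by case: y0 => /= i Hi; apply: leq_ltn_trans Hi. Qed.

Lemma sum_labels (st : seq entry) x :
  \big[Rplus/0]_(y : 'I_k) sumWy st x y = sumW st.
Proof.
elim: st => [|e st IH].
  rewrite /sumW big_nil; apply: big1 => y _; by rewrite /sumWy big_nil.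
rewrite /sumW big_cons -/(sumW st) -IH.
have -> : \big[Rplus/0]_(y : 'I_k) sumWy (e :: st) x y =
   \big[Rplus/0]_(y : 'I_k) ((if y == A e.2 x then e.1 else 0) + sumWy st x y).
  apply: eq_bigr => y _; rewrite /sumWy big_cons eq_sym; case: ifP => _ //; lra.
rewrite big_split /=; congr (_ + _).
by rewrite -big_mkcond /= big_pred1_eq.
Qed.

Lemma sumWy_argmax (st : seq entry) x :
  sumW st <= INR k * sumWy st x (argmax (sumWy st x)).
Proof.
rewrite -(sum_labels st x).
have -> : INR k * sumWy st x (argmax (sumWy st x)) =
   \big[Rplus/0]_(y : 'I_k) sumWy st x (argmax (sumWy st x)).
  by rewrite big_const_ord iter_Rplus.
apply: (big_ind2 (fun a b => a <= b)) => [|a1 a2 b1 b2 ??|y _]; first lra.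
  lra.
exact: argmax_ge.
Qed.


Lemma sumW_nil : sumW [::] = 0.
Proof. by rewrite /sumW big_nil. Qed.
Lemma sumW_cons e st : sumW (e :: st) = e.1 + sumW st.
Proof. by rewrite /sumW big_cons. Qed.
Lemma sumW_cat s1 s2 : sumW (s1 ++ s2) = sumW s1 + sumW s2.
Proof. by rewrite /sumW big_cat. Qed.
Lemma sumWy_cons e st x y :
  sumWy (e :: st) x y = (if A e.2 x == y then e.1 else 0) + sumWy st x y.
Proof. rewrite /sumWy big_cons; case: ifP => _ //; lra. Qed.

Lemma sumW_map_labels (g : 'I_k -> entry) c :
  (forall l, (g l).1 = c) -> sumW [seq g l | l <- enum 'I_k] = INR k * c.
Proof.
move=> Hg; rewrite /sumW big_map.
rewrite (eq_bigr (fun _ => c)); last by move=> i _; apply: Hg.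
by rewrite big_const_seq iter_Rplus count_predT size_enum_ord.
Qed.

Lemma INRk_neq0 : INR k <> 0.
Proof. apply: not_0_INR => Hk; move: kpos; rewrite Hk. done. Qed.

Lemma sumW_child e x y b :
  sumW (child e x y b) =
  e.1 - (if b then 0 else if A e.2 x == y then (1 - tau - rho) * e.1 else 0).
Proof.
have Hk := INRk_neq0.
rewrite /child; case: b; case: eqP => _;
  rewrite ?sumW_cons ?sumW_nil /=; try lra.
rewrite (sumW_map_labels (c := e.1 * (rho / INR k))) //.
field. exact: Hk.
Qed.

Lemma sumW_step st x y b :
  sumW (step st x y b) = sumW st - (if b then 0 else (1 - tau - rho) * sumWy st x y).
Proof.
elim: st => [|e st IH]; first by rewrite /step /= sumW_nil /sumWy big_nil; case: b; lra.
have -> : step (e :: st) x y b = child e x y b ++ step st x y b by [].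
rewrite sumW_cat IH sumW_child sumW_cons sumWy_cons.
clear IH; case: b; case: (A e.2 x == y); simpl; lra.
Qed.

Lemma In_step e c st x y b :
  List.In e st -> List.In c (child e x y b) -> List.In c (step st x y b).
Proof.
elim: st => [|e' st IH] //= [->|H] Hc; apply: List.in_or_app; [by left|right; exact: IH].
Qed.

Lemma In_step_inv c st x y b :
  List.In c (step st x y b) -> exists e, List.In e st /\ List.In c (child e x y b).
Proof.
elim: st => [|e st IH] //= H0; case: (List.in_app_or _ _ _ H0) => H.
  by exists e; split; [left|].
by have [e' [H1 H2]] := IH H; exists e'; split; [right|].
Qed.

Definition NN (st : seq entry) := forall e, List.In e st -> 0 <= e.1.

Lemma NN_step st x y b : 0 <= tau <= 1 -> 0 <= rho -> NN st -> NN (step st x y b).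
Proof.
move=> Ht Hr HN c /In_step_inv [e [He Hc]]; have He0 := HN e He.
have Hk : 0 < INR k by apply: lt_0_INR; apply/ltP; exact: kpos.
have Hrk : 0 <= rho / INR k.
  by apply: Rmult_le_pos; [lra|left; apply: Rinv_0_lt_compat].
move: Hc; rewrite /child; case: b; case: ifP => _ /=.
- by move=> [<-|[]].
- move=> [<-|[<-|[]]] /=; nra.
- move=> [<-|]; first by simpl; nra.
  elim: (enum 'I_k) => [|l s IHs] //= [<-|]; [simpl; nra|exact: IHs].
- by move=> [<-|[]].
Qed.

Lemma sumW_ge0 st : NN st -> 0 <= sumW st.
Proof.
elim: st => [|e st IH] HN; first by rewrite sumW_nil; lra.
rewrite sumW_cons; have := HN e (or_introl erefl).
have := IH (fun c Hc => HN c (or_intror Hc)); lra.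
Qed.

Lemma In_le_sumW st e : NN st -> List.In e st -> e.1 <= sumW st.
Proof.
elim: st => [|e' st IH] //= HN [<-|H]; rewrite sumW_cons.
  have : 0 <= sumW st by apply: sumW_ge0 => c Hc; apply: HN; right.
  lra.
have := HN e' (or_introl erefl); have := IH (fun c Hc => HN c (or_intror Hc)) H; lra.
Qed.


Variable f : X -> 'I_k.

Definition hmap (zs : seq X) := [seq (z, f z) | z <- zs].
Definition mA (zs : seq X) := std_mistakes A f [::] zs.

Lemma std_mistakes_rcons (L : std_learner X 'I_k) h zs x :
  std_mistakes L f h (rcons zs x) =
  (std_mistakes L f h zs + (L (h ++ hmap zs) x != f x))%nat.
Proof.
elim: zs h => [|z zs IH] h /=; first by rewrite cats0 addn0.
by rewrite IH cat_rcons addnA.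
Qed.

Lemma mA_rcons zs x : mA (rcons zs x) = (mA zs + (A (hmap zs) x != f x))%nat.
Proof. by rewrite /mA std_mistakes_rcons. Qed.

Definition gam := rho / INR k.

Definition Good (st : seq entry) (l : nat) :=
  exists zs w, List.In (w, hmap zs) st /\ gam ^ (mA zs) * tau ^ l <= w.

Hypothesis Htau : 0 < tau <= 1.
Hypothesis Hrho : 0 < rho.
Hypothesis Hgam : gam <= 1 - tau.

Lemma gam_pos : 0 < gam.
Proof.
have Hk : 0 < INR k by apply: lt_0_INR; apply/ltP; exact: kpos.
rewrite /gam; apply: Rdiv_lt_0_compat; lra.
Qed.

Lemma Good_step st l x y lie :
  Good st l -> Good (step st x y ((y == f x) (+) lie)) (l + lie)%nat.
Proof.
move=> [zs [w [Hin Hw]]].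
have Hg := gam_pos.
have Hp1 : 0 <= gam ^ mA zs by apply: pow_le; lra.
have Hp2 : 0 <= tau ^ l by apply: pow_le; lra.
have Hl : tau ^ (l + lie)%nat <= tau ^ l.
  case: lie; rewrite ?addn1 ?addn0 /=; last lra.
  have : tau * tau ^ l <= 1 * tau ^ l by apply: Rmult_le_compat_r; lra.
  lra.
have Hw' : gam ^ mA zs * tau ^ (l + lie)%nat <= w.
  apply: Rle_trans Hw; apply: Rmult_le_compat_l => //.
have Htl : 0 <= tau ^ (l + lie)%nat by apply: pow_le; lra.
case Hb: ((y == f x) (+) lie).
-
  case Ha: (A (hmap zs) x == y).
  + exists zs, w; split => //; apply: (In_step (e := (w, hmap zs))) => //.
    by rewrite /child /= Ha; left.
  + case Hy: (y == f x).
    *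
      have Hlie : lie = false by move: Hb; rewrite Hy; case: (lie).
      exists (rcons zs x), (w * (1 - tau)); split.
        apply: (In_step (e := (w, hmap zs))) => //.
        rewrite /child /= Ha; left; congr (_, _).
        by rewrite /hmap map_rcons (eqP Hy).
      rewrite mA_rcons.
      have -> : (A (hmap zs) x != f x) = true by rewrite -(eqP Hy) Ha.
      rewrite Hlie addn0 in Hw' *.
      rewrite addn1 /=.
      have : gam * (gam ^ mA zs * tau ^ l) <= (1 - tau) * w.
        apply: Rmult_le_compat; try nra; lra.
      nra.
    *
      have Hlie : lie = true by move: Hb; rewrite Hy; case: (lie).
      exists zs, (w * tau); split.
        apply: (In_step (e := (w, hmap zs))) => //.
        by rewrite /child /= Ha; right; left.
      rewrite Hlie addn1 /=.
      rewrite Hlie addn1 /= in Hw'.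
      have : gam ^ mA zs * tau ^ l * tau <= w * tau.
        apply: Rmult_le_compat_r; lra.
      nra.
-
  case Ha: (A (hmap zs) x == y).
  + case Hy: (y == f x).
    * have Hlie : lie = true by move: Hb; rewrite Hy; case: (lie).
      exists zs, (w * tau); split.
        apply: (In_step (e := (w, hmap zs))) => //.
        by rewrite /child /= Ha; left.
      rewrite Hlie addn1 /=.
      have : gam ^ mA zs * tau ^ l * tau <= w * tau.
        apply: Rmult_le_compat_r; lra.
      nra.
    * have Hlie : lie = false by move: Hb; rewrite Hy; case: (lie).
      exists (rcons zs x), (w * gam); split.
        apply: (In_step (e := (w, hmap zs))) => //.
        rewrite /child /= Ha; right.
        have -> : (w * gam, hmap (rcons zs x)) =
           (fun l => (w * (rho / INR k), rcons (hmap zs) (x, l))) (f x).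
          by rewrite /hmap map_rcons.
        apply: In_map_seq; apply: In_mem; by rewrite mem_enum.
      rewrite mA_rcons.
      have -> : (A (hmap zs) x != f x) = true by rewrite (eqP Ha) Hy.
      rewrite Hlie addn0 addn1 /=.
      have : gam * (gam ^ mA zs * tau ^ l) <= gam * w.
        apply: Rmult_le_compat_l; lra.
      nra.
  + exists zs, w; split => //.
    apply: (In_step (e := (w, hmap zs))) => //.
    by rewrite /child /= Ha; left.
Qed.


Fixpoint run (h : seq (X * 'I_k * bool)) (xs : seq (X * bool)) :=
  match xs with
  | [::] => h
  | (x, lie) :: xs' =>
      let y := learner h x in run (rcons h (x, y, (y == f x) (+) lie)) xs'
  end.

Fixpoint nNO (h : seq (X * 'I_k * bool)) (xs : seq (X * bool)) : nat :=
  match xs with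
  | [::] => 0%nat
  | (x, lie) :: xs' =>
      let y := learner h x in
      (~~ ((y == f x) (+) lie) + nNO (rcons h (x, y, (y == f x) (+) lie)) xs')%nat
  end.

Lemma state_rcons h t : state (rcons h t) = step (state h) t.1.1 t.1.2 t.2.
Proof. by rewrite /state foldl_rcons. Qed.

Lemma mist_le h xs :
  (ag_mistakes learner f h xs <= nNO h xs + count snd xs)%nat.
Proof.
elim: xs h => [|[x lie] xs IH] h //=.
set y := learner h x.
have := IH (rcons h (x, y, (y == f x) (+) lie)).
case: (y == f x); case: (lie); rewrite /=; lia.
Qed.

Lemma Good_run h xs l :
  Good (state h) l -> Good (state (run h xs)) (l + count snd xs)%nat.
Proof.
elim: xs h l => [|[x lie] xs IH] h l /=; first by rewrite addn0.
move=> HG; rewrite addnA; apply: IH; rewrite state_rcons /=.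
exact: Good_step.
Qed.

Lemma NN_run h xs : 0 <= rho -> NN (state h) -> NN (state (run h xs)).
Proof.
move=> Hr; elim: xs h => [|[x lie] xs IH] h //= HN; apply: IH.
rewrite state_rcons; apply: NN_step => //; lra.
Qed.

Definition cc := 1 - tau - rho.
Definition qq := 1 - cc / INR k.
Hypothesis Hcc : 0 <= cc.
Hypothesis Hqq : 0 <= qq.

Lemma W_run h xs :
  sumW (state (run h xs)) <= sumW (state h) * qq ^ (nNO h xs).
Proof.
have Hk : 0 < INR k by apply: lt_0_INR; apply/ltP; exact: kpos.
elim: xs h => [|[x lie] xs IH] h /=; first lra.
set y := learner h x; set b := (y == f x) (+) lie.
apply: Rle_trans (IH _) _.
rewrite state_rcons /= sumW_step pow_add -Rmult_assoc.
have Hq : 0 <= qq ^ nNO (rcons h (x, y, b)) xs by apply: pow_le.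
apply: Rmult_le_compat_r => //.
have Hm := sumWy_argmax (state h) x.
rewrite -/y in Hm.
clear Hq IH; case: b => /=; first lra.
rewrite /qq -/cc.
have : cc * sumW (state h) <= cc * (INR k * sumWy (state h) x y) by apply: Rmult_le_compat_l.
move=> H.
have -> : sumW (state h) * ((1 - cc / INR k) * 1) = sumW (state h) - cc * sumW (state h) / INR k by field; lra.
apply: Rplus_le_compat_l; apply: Ropp_le_contravar.
apply: (Rmult_le_reg_r (INR k)) => //.
have -> : cc * sumW (state h) / INR k * INR k = cc * sumW (state h) by field; lra.
nra.
Qed.


Lemma ln_le_sub1 z : 0 < z -> ln z <= z - 1.
Proof. move=> Hz; have := exp_ineq1_le (ln z); rewrite exp_ln //; lra. Qed.

Lemma ln_le_mono a b : 0 < a -> a <= b -> ln a <= ln b.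
Proof. move=> Ha [H|->]; [left; apply: ln_increasing|]; lra. Qed.

Lemma pow_decr a m n : 0 < a <= 1 -> (m <= n)%nat -> a ^ n <= a ^ m.
Proof.
move=> Ha /subnKC <-; rewrite pow_add.
have : a ^ (n - m) <= 1.
  rewrite -(pow1 (n - m)); apply: pow_incr; lra.
have : 0 <= a ^ m by apply: pow_le; lra.
nra.
Qed.

Lemma final_bound (d eta : nat) xs :
  (forall zs, (mA zs <= d)%nat) -> (count snd xs <= eta)%nat ->
  0 < qq -> 0 < cc ->
  INR (ag_mistakes learner f [::] xs) <=
  INR k / cc * (INR d * (- ln gam) + INR eta * (- ln tau)) + INR eta.
Proof.
move=> Hstd Hcnt Hq Hc.
have Hk : 0 < INR k by apply: lt_0_INR; apply/ltP; exact: kpos.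
have Hg := gam_pos.
have HG0 : Good (state [::]) 0.
  exists [::], 1; split; first by left.
  rewrite /=; lra.
have [zs [w [Hin Hw]]] := Good_run xs HG0.
have HN : NN (state (run [::] xs)).
  apply: NN_run; first lra.
  by move=> e [<-|[]] /=; lra.
have Hw1 := In_le_sumW HN Hin.
have HW := W_run [::] xs.
rewrite /state /= sumW_cons sumW_nil in HW.
rewrite -/(state _) in HW Hw1.
set N := nNO [::] xs in HW.
have HP : gam ^ d * tau ^ eta <= qq ^ N.
  have H1 : gam ^ d * tau ^ eta <= gam ^ mA zs * tau ^ (0 + count snd xs)%nat.
    apply: Rmult_le_compat.
    - apply: pow_le; lra.
    - apply: pow_le; lra.
    - apply: pow_decr => //; lra.
    - by apply: pow_decr; [lra|rewrite add0n].
  simpl in Hw1, HW; lra.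
have Hpos : 0 < gam ^ d * tau ^ eta.
  apply: Rmult_lt_0_compat; apply: pow_lt; lra.
have Hln := ln_le_mono Hpos HP.
rewrite ln_mult in Hln; try (apply: pow_lt; lra).
rewrite !ln_pow in Hln; try lra.
have Hlq := ln_le_sub1 Hq.
have HNq : INR N * ln qq <= INR N * (qq - 1).
  apply: Rmult_le_compat_l => //; exact: pos_INR.
have HN2 : INR N * cc / INR k <= INR d * - ln gam + INR eta * - ln tau.
  have -> : INR N * cc / INR k = - (INR N * (qq - 1)) by rewrite /qq; field; lra.
  lra.
have HN3 : INR N <= INR k / cc * (INR d * - ln gam + INR eta * - ln tau).
  apply: (Rmult_le_reg_r (cc / INR k)); first by apply: Rdiv_lt_0_compat.
  have -> : INR k / cc * (INR d * - ln gam + INR eta * - ln tau) * (cc / INR k) =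
     INR d * - ln gam + INR eta * - ln tau by field; lra.
  have -> : INR N * (cc / INR k) = INR N * cc / INR k by rewrite /Rdiv Rmult_assoc.
  done.
have Hm := mist_le [::] xs.
have Hm2 : (ag_mistakes learner f [::] xs <= N + eta)%nat.
  by apply: leq_trans Hm _; rewrite leq_add2l.
have := le_INR _ _ (elimT leP Hm2); rewrite plus_INR; lra.
Qed.

End Alg.
Section LimSec.
Local Open Scope R_scope.
Definition E (u : R) := (u + ln (u + 3)) / ((1 - 2 / (u + 3)) * u) - 1.
Definition epsf (n : nat) := E (ln (INR n)).

Lemma ln_le_2sqrt y : 0 < y -> ln y <= 2 * sqrt y.
Proof.
intros Hy.
assert (Hs : 0 < sqrt y) by (apply sqrt_lt_R0; lra).
assert (H2 : ln y = 2 * ln (sqrt y)).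
{ rewrite -{1}(sqrt_sqrt y); last lra. rewrite ln_mult; lra. }
rewrite H2.
pose proof (exp_ineq1_le (ln (sqrt y))) as H. rewrite exp_ln in H; lra.
Qed.

Lemma E_bound u : 1 <= u -> 0 <= E u <= 18 / sqrt u.
Proof.
intros Hu.
set (L := ln (u + 3)).
assert (HL0 : 0 <= L).
{ unfold L. rewrite -ln_1. destruct (Rlt_or_le 1 (u+3)) as [H|H].
  - left; apply ln_increasing; lra.
  - lra. }
assert (HE : E u = (u * L + 2 * u + 3 * L) / ((u + 1) * u)).
{ unfold E. fold L. field. lra. }
set (r := sqrt u).
assert (Hr1 : 1 <= r).
{ unfold r. rewrite <- sqrt_1. apply sqrt_le_1_alt. lra. }
assert (Hrr : r * r = u) by (unfold r; apply sqrt_sqrt; lra).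
assert (HL4 : L <= 4 * r).
{ unfold L. apply Rle_trans with (2 * sqrt (u + 3)).
  - apply ln_le_2sqrt; lra.
  - assert (sqrt (u + 3) <= sqrt ((2 * r) * (2 * r))).
    { apply sqrt_le_1_alt. nra. }
    rewrite sqrt_square in H; lra. }
rewrite HE. split.
- apply Rmult_le_pos; [nra|]. left; apply Rinv_0_lt_compat; nra.
- apply (Rmult_le_reg_r ((u + 1) * u * r)); [nra|].
  assert (Heq1 : (u * L + 2 * u + 3 * L) / ((u + 1) * u) * ((u + 1) * u * r)
                = (u * L + 2 * u + 3 * L) * r) by (field; lra).
  assert (Heq2 : 18 / r * ((u + 1) * u * r) = 18 * (u + 1) * u) by (field; lra).
  rewrite Heq1 Heq2 -Hrr.
  assert (H1 : L * (r * r * r) <= 4 * r * (r * r * r)).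
  { apply Rmult_le_compat_r; nra. }
  assert (H2 : L * r <= 4 * r * r) by nra.
  assert (H3 : r * r * r <= r * r * r * r) by nra.
  nra.
Qed.

Lemma epsf_cv : Un_cv epsf 0.
Proof.
intros e He.
set (T := 1 + (18 / e) * (18 / e)).
destruct (archimed (exp T)) as [Hup _].
assert (HexpT : 0 < exp T) by apply exp_pos.
assert (Hz : (0 <= up (exp T))%Z).
{ apply le_IZR. lra. }
exists (Z.to_nat (up (exp T))).
intros n Hn.
assert (HN : exp T <= INR n).
{ apply le_INR in Hn. rewrite (INR_IZR_INZ (Z.to_nat _)) (Znat.Z2Nat.id _ Hz) in Hn; lra. }
assert (Hu : T <= ln (INR n)).
{ rewrite -(ln_exp T). destruct HN as [H|H].
  - left; apply ln_increasing; lra.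
  - rewrite H; lra. }
assert (HT1 : 1 <= T) by (unfold T; nra).
destruct (@E_bound (ln (INR n))) as [H0 H1]; [lra|].
unfold R_dist, epsf. rewrite Rminus_0_r Rabs_pos_eq; last lra.
apply Rle_lt_trans with (1 := H1).
assert (Hsq : 18 / e < sqrt (ln (INR n))).
{ rewrite -(sqrt_square (18 / e)).
  - apply sqrt_lt_1; [nra| |unfold T in Hu; lra].
    apply Rle_trans with T; lra.
  - left; apply Rdiv_lt_0_compat; lra. }
assert (Hpos : 0 < 18 / e) by (apply Rdiv_lt_0_compat; lra).
apply (Rmult_lt_reg_r (sqrt (ln (INR n)))); [lra|].
assert (Heq : 18 / sqrt (ln (INR n)) * sqrt (ln (INR n)) = 18) by (field; lra).
rewrite Heq.
assert (Heq2 : 18 = e * (18 / e)) by (field; lra).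
rewrite {1}Heq2. apply Rmult_lt_compat_l; lra.
Qed.
End LimSec.

Lemma opt_exists (P : nat -> Prop) m :
  P m -> exists a, (P a /\ forall m', P m' -> (a <= m')%nat) /\ (a <= m)%nat.
Proof.
elim: m {-2}m (leqnn m) => [|n IH] m Hm Pm.
  exists m; split; last done; split => // m' _.
  by move: Hm; rewrite leqn0 => /eqP ->.
case: (classic (exists m', P m' /\ (m' < m)%nat)) => [[m' [Pm' Hlt]]|Hno].
  have Hm' : (m' <= n)%nat by rewrite -ltnS; apply: leq_trans Hlt Hm.
  have [a [Ha Ham]] := IH m' Hm' Pm'.
  exists a; split => //; apply: leq_trans Ham (ltnW Hlt).
exists m; split => //; split => // m' Pm'.
rewrite leqNgt; apply/negP => Hlt; apply: Hno; by exists m'.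
Qed.

Lemma floor_nat (B : R) : (0 <= B)%R ->
  (INR (Z.to_nat (Int_part B)) <= B)%R /\
  forall M : nat, (INR M <= B)%R -> (M <= Z.to_nat (Int_part B))%nat.
Proof.
move=> HB; have [H1 H2] := base_Int_part B.
have Hz : (0 <= Int_part B)%Z.
  have : (-1 < Int_part B)%Z by apply: lt_IZR; lra.
  lia.
split.
  rewrite INR_IZR_INZ Znat.Z2Nat.id //; lra.
move=> M HM.
have : (Z.of_nat M < Int_part B + 1)%Z.
  by apply: lt_IZR; rewrite plus_IZR -INR_IZR_INZ; lra.
move=> H; apply/leP; lia.
Qed.

Theorem mainTheorem6 :
  exists eps : nat -> R, Un_cv eps 0%R /\
    forall k : nat, (2 <= k)%N ->
    forall (X : Type) (F : (X -> 'I_k) -> Prop) (eta d : nat),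
      is_opt_std F d ->
      exists a : nat, is_opt_ag F eta a /\
        (INR a <= (1 + eps k) * INR k * ln (INR k) * INR (d + eta))%R.
Proof.
exists epsf; split; first exact: epsf_cv.
move=> k Hk X F eta d [[A HA] _].
have Hk0 : (0 < k)%N by apply: leq_trans Hk.
pose y0 : 'I_k := Ordinal Hk0.
have HkR : (2 <= INR k)%R by apply: (le_INR 2); apply/leP.
set u := ln (INR k).
have Hu : (/ 2 < u)%R.
  apply: Rlt_le_trans ln_lt_2 _; rewrite /u.
  case: HkR => [H|<-]; last lra.
  left; apply: ln_increasing; lra.
set s := (u + 3)%R.
set rho := (/ s)%R.
have Hs : (3 <= s)%R by rewrite /s; lra.
have Hrho : (0 < rho)%R by apply: Rinv_0_lt_compat; lra.
have Hrho3 : (rho <= / 3)%R by apply: Rinv_le_contravar; lra.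
have Hinv3 : (/ 3 = 1 / 3)%R by field.
have Htau : (0 < rho <= 1)%R by lra.
have Hkpos : (0 < INR k)%R by lra.
have Hgam : (gam k rho <= 1 - rho)%R.
  rewrite /gam; apply: (Rmult_le_reg_r (INR k)) => //.
  have -> : (rho / INR k * INR k = rho)%R by field; lra.
  nra.
have Hcc1 : (cc rho rho = 1 - 2 / s)%R by rewrite /cc /rho; field; lra.
have Hcc : (0 < cc rho rho)%R.
  rewrite Hcc1; have : (2 / s <= 2 / 3)%R.
    rewrite /Rdiv; apply: Rmult_le_compat_l; first lra.
    by apply: Rinv_le_contravar; lra.
  lra.
have Hcc' : (cc rho rho <= 1)%R.
  rewrite Hcc1; have : (0 <= 2 / s)%R by apply: Rlt_le; apply: Rdiv_lt_0_compat; lra.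
  lra.
have Hqq : (0 < qq k rho rho)%R.
  rewrite /qq; have : (cc rho rho / INR k <= 1 / 2)%R.
    apply: (Rmult_le_reg_r (INR k)) => //.
    have -> : (cc rho rho / INR k * INR k = cc rho rho)%R by field; lra.
    lra.
  lra.
have Hlng : (- ln (gam k rho) = u + ln s)%R.
  rewrite /gam /Rdiv ln_mult; try (apply: Rinv_0_lt_compat; lra).
  rewrite /rho !ln_Rinv; [rewrite /u; lra|lra|lra].
have Hlnt : (- ln rho = ln s)%R by rewrite /rho ln_Rinv; lra.
have Hlns : (0 <= ln s)%R.
  rewrite -ln_1; left; apply: ln_increasing; lra.
set K := (INR k / cc rho rho)%R.
have HK : (INR k <= K)%R.
  rewrite /K; apply: (Rmult_le_reg_r (cc rho rho)) => //.
  have -> : (INR k / cc rho rho * cc rho rho = INR k)%R by field; lra.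
  nra.
set B := (K * (u + ln s) * INR (d + eta))%R.
have HB0 : (0 <= B)%R.
  rewrite /B; apply: Rmult_le_pos; last exact: pos_INR.
  apply: Rmult_le_pos; lra.
have [Hfl1 Hfl2] := floor_nat HB0.
have Hbound : ag_bound F eta (Z.to_nat (Int_part B)).
  exists (learner A y0 rho rho) => f Ff xs Hcnt.
  apply: Hfl2.
  have Hstd : forall zs, (mA A f zs <= d)%N by move=> zs; apply: HA.
  have H := @final_bound X k A y0 rho rho f Htau Hrho Hgam (Rlt_le _ _ Hcc)
              (Rlt_le _ _ Hqq) d eta xs Hstd Hcnt Hqq Hcc.
  apply: Rle_trans H _.
  rewrite -/K Hlng Hlnt /B plus_INR.
  have Hd := pos_INR d; have He := pos_INR eta.
  have : (1 <= K * u)%R by nra.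
  nra.
have [a [Ha Ham]] := opt_exists Hbound.
exists a; split => //.
apply: Rle_trans (le_INR _ _ (elimT leP Ham)) _.
apply: Rle_trans Hfl1 _.
rewrite /B /K /epsf /E -/u -/s.
have Hu0 : (u <> 0)%R by lra.
have Hs0 : (s <> 0)%R by lra.
have Hcs : (1 - 2 / s <> 0)%R by rewrite -Hcc1; lra.
rewrite Hcc1.
apply: Req_le; field; split => //; lra.
Qed.
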